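(* Let $q$ be an odd prime power, $\lambda$ a divisor of $q+1$ with $2\le\lambda<q+1$, $m=2t+1\ge5$, and $n=\frac{q^m+1}{\lambda}$. If $t$ is even, the smallest positive integer $i$ with $i\not\equiv0\pmod q$ that is not a coset leader modulo $n$ is $\frac{q^{t+1}+1}{\lambda}-\lfloor\frac q\lambda\rfloor$. If $t$ is odd, the smallest such $i$ is $\frac{q^{t+1}-1}{\lambda}-\lfloor\frac{q-2}{\lambda}\rfloor$.
   Context: For $0\le s\le n-1$, $C_s=\{sq^i\bmod n:i\ge0\}$ is the $q$-cyclotomic coset of $s$ modulo $n$; its least element is its coset leader. *)

(* Defs.v *)
From mathcomp Require Import all_boot.
Set Implicit Arguments. Unset Strict Implicit. Unset Printing Implicit Defensive.

Definition cyc_coset (q n s : nat) : nat -> Prop :=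
  fun x => exists i : nat, x = (s * q ^ i) %% n.

Definition coset_leader (q n s : nat) : Prop :=
  s < n /\ (forall x, cyc_coset q n s x -> s <= x).

Definition prime_power (q : nat) : Prop :=
  exists p k : nat, prime p /\ 0 < k /\ q = p ^ k.

Definition least_nonleader (q n d : nat) : Prop :=
  [/\ 0 < d, ~~ (q %| d), ~ coset_leader q n d &
      forall i, 0 < i -> i < d -> ~~ (q %| i) -> coset_leader q n i].

(* Main.v *)
Require Import Defs.
From mathcomp Require Import all_boot zify.
Set Implicit Arguments. Unset Strict Implicit.

Lemma mod_neg X N : 0 < X %% N -> (X * (N-1)) %% N = N - X %% N.
Proof.
move=> H.
case: (posnP N) => [->|N0]; first by rewrite !modn0 muln0.
have E := divn_eq X N.
have Hlt := ltn_pmod X N0.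
set c := X %/ N in E *; set r := X %% N in E H Hlt *.
have -> : X * (N-1) = (X - c - 1) * N + (N - r).
  rewrite E; nia.
by rewrite modnMDl modn_small; lia.
Qed.

Lemma period q N a j m : (q^(2*m)) %% N = 1 %% N ->
  (a*q^j) %% N = (a * q^(j %% (2*m))) %% N.
Proof.
move=> H.
rewrite -modnMmr [in RHS]/= -[in RHS]modnMmr; congr (_ %% _); congr (_ * _).
rewrite {1}(divn_eq j (2*m)) expnD mulnC [_ * (2*m)]mulnC expnM -modnMmr -modnXm H modnXm exp1n.

by rewrite modnMmr muln1.
Qed.

Lemma bounds_v q t a v : 2 <= q -> 1 <= t -> 0 < a -> a <= q*q^t - q -> ~~ (q %| a) ->
  v < 2*t+1 ->
  a <= (a*q^v) %% (q^(2*t+1)+1) /\ (a*q^v) %% (q^(2*t+1)+1) + a <= q^(2*t+1)+1.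
Proof.
move=> q2 t1 a0 aQ qa vm.
have qm : q^(2*t+1) = q*q^t*q^t by rewrite addnC expnD expn1 mul2n -addnn expnD mulnA.
have Qq : q <= q^t by rewrite -{1}(expn1 q) leq_pexp2l //; lia.
rewrite qm.
case: (leqP v t) => vt.
  have Pv : q^v <= q^t by rewrite leq_pexp2l //; lia.
  have Pv1 : 1 <= q^v by rewrite expn_gt0; lia.
  have lt : a * q^v < q*q^t*q^t + 1 by nia.
  rewrite modn_small //; nia.
set k := 2*t+1 - v.
have vk : q^v * q^k = q*q^t*q^t by rewrite -expnD -qm; congr (_ ^ _); rewrite /k; lia.
have k1 : 1 <= k by rewrite /k; lia.
have kt : k <= t by rewrite /k; lia.
have E := divn_eq a (q^k).
have Kpos : 0 < q^k by rewrite expn_gt0; lia.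
have Llt := ltn_pmod a Kpos.
have L1 : 0 < a %% q^k.
  rewrite lt0n; apply/negP => /eqP/eqP; rewrite -/(dvdn _ _) => /(dvdn_trans _) H.
  by move/negP: qa; apply; apply: H; rewrite -{1}(expn1 q) dvdn_exp2l.
set H := a %/ q^k in E *; set L := a %% q^k in E L1 Llt *.
have Pge : q*q^t <= q^v by rewrite -expnS leq_pexp2l //; lia.
have HL : H + a <= L * q^v.
  case: (ltnP v (t.+2)) => vt2.
    have vt1 : v = t.+1 by lia.
    have kt' : k = t by rewrite /k; lia.
    rewrite kt' in E Llt.
    rewrite vt1 expnS.
    have : H < q by nia.
    nia.
  have : q*q*q^t <= q^v by rewrite -mulnA -!expnS leq_pexp2l //; lia.
  have : H <= a by rewrite E; nia.
  nia.
have eq : a * q^v = H * (q*q^t*q^t + 1) + (L * q^v - H).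
  rewrite E -[q*q^t*q^t]vk; nia.
have up : L * q^v + a <= q*q^t*q^t + H.
  have : L * q^v <= q^k * q^v - q^v by nia.
  rewrite [q^k * _]mulnC vk => h.
  have : a <= q^v by lia.
  move: h; set X := L * q^v; set Y := q*q^t*q^t; lia.
rewrite eq modnMDl modn_small; lia.
Qed.

Lemma sq_mod N : 1 < N -> ((N-1)*(N-1)) %% N = 1 %% N.
Proof.
move=> N1; rewrite mod_neg (modn_small (_ : N - 1 < N)); try lia.
by rewrite (modn_small (_ : 1 < N)) //; lia.
Qed.

Lemma leaderN q t a j : 2 <= q -> 1 <= t -> 0 < a -> a <= q*q^t - q -> ~~ (q %| a) ->
  a <= (a*q^j) %% (q^(2*t+1)+1).
Proof.
move=> q2 t1 a0 aQ qa.
set m := 2*t+1; set N := q^m + 1.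
have qmN : q^m = N - 1 by rewrite /N; lia.
have N1 : 1 < N.
  have : 0 < q^m by rewrite expn_gt0; lia.
  rewrite /N; lia.
have P : q^(2*m) %% N = 1 %% N by rewrite mul2n -addnn expnD qmN sq_mod.
rewrite (period a j P).
have := ltn_pmod j (_ : 0 < 2*m); move=> /(_ ltac:(rewrite /m; lia)).
set w := j %% _ => wlt.
case: (ltnP w m) => wm.
  by case: (bounds_v q2 t1 a0 aQ qa wm).
have [v wv] : exists v, w = m + v by exists (w - m); lia.
have vm : v < m by move: wlt; rewrite wv /m; lia.
rewrite wv.
case: (bounds_v q2 t1 a0 aQ qa vm); rewrite -/m -/N => h1 h2.
rewrite expnD qmN mulnCA mulnC mod_neg; lia.
Qed.

Lemma nonleaderN q t a : 2 <= q -> 2 <= t -> q*q^t - q < a -> a <= q*q^t ->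
  (a*q^(t + (2*t+1))) %% (q^(2*t+1)+1) < a.
Proof.
move=> q2 t2 a1 a2.
have qm : q^(2*t+1) = q*q^t*q^t by rewrite addnC expnD expn1 mul2n -addnn expnD mulnA.
have Qq : q^2 <= q^t by rewrite leq_pexp2l //; lia.
rewrite expnS expn1 in Qq.
rewrite expnD mulnA qm.
set Y := q * q ^ t * q ^ t.
have := @mod_neg (a*q^t) (Y+1); rewrite addnK => ->.
  rewrite modn_small; rewrite /Y; nia.
rewrite modn_small; rewrite /Y; nia.
Qed.

Lemma main_gen q l t d c : 2 <= q -> 2 <= t -> 0 < l -> coprime q l ->
  l %| q^(2*t+1)+1 -> 1 <= c -> c < q -> c <= l ->
  l * d = q * (q^t - 1) + c ->
  least_nonleader q ((q^(2*t+1)+1) %/ l) d.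
Proof.
move=> q2 t2 l0 cql ldv c1 cq cl ld.
set N := q^(2*t+1)+1.
have Nn : N = l * (N %/ l) by rewrite mulnC divnK.
set n := N %/ l in Nn *.
have Q1 : q <= q^t by rewrite -{1}(expn1 q) leq_pexp2l //; lia.
have qm : q^(2*t+1) = q*q^t*q^t by rewrite addnC expnD expn1 mul2n -addnn expnD mulnA.
have NQ : N = q*q^t*q^t + 1 by rewrite /N qm.
have ld' := ld; rewrite mulnBr muln1 in ld'.
have qQ : q <= q * q^t by rewrite leq_pmulr // expn_gt0; lia.
have qQQ : q * q^t <= q * q^t * q^t by rewrite leq_pmulr // expn_gt0; lia.
have ldb : l * d <= q * q^t by rewrite ld'; lia.
have ldb2 : q * q^t - q < l * d by rewrite ld'; lia.
split.
- by rewrite lt0n; apply/eqP => d0; move: ld; rewrite d0 muln0; lia.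
- apply/negP => /(dvdn_mull l); rewrite ld dvdn_addr ?dvdn_mulr // => /(dvdn_leq _).
  lia.
- move=> [_ H].
  have := H ((d * q^(t+(2*t+1))) %% n) (ex_intro _ _ erefl).
  rewrite -(leq_pmul2l l0) muln_modr mulnA -Nn NQ -qm.
  have := nonleaderN q2 t2 ldb2 ldb. lia.
- move=> i i0 id qi; split.
    rewrite -(ltn_pmul2l l0) -Nn NQ.
    have : l * i < l * d by rewrite ltn_pmul2l.
    lia.
  move=> x [j ->].
  rewrite -(leq_pmul2l l0) muln_modr mulnA -Nn NQ -qm.
  apply: leaderN => //; first lia.
  - by rewrite muln_gt0 l0.
  - have : l * i <= l * (d - 1) by rewrite leq_pmul2l //; lia.
    rewrite mulnBr muln1; lia.
  - by rewrite Gauss_dvdr.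
Qed.

Lemma divn_of a b r l : 0 < l -> r < l -> a = b*l + r -> a %/ l = b.
Proof. by move=> l0 rl ->; rewrite divnMDl // divn_small // addn0. Qed.

Lemma pow_even q s : 1 <= q -> (q^(2*s)) %% q.+1 = 1.
Proof.
move=> q1.
have h : (q^2) %% q.+1 = 1 %% q.+1.
  have := @sq_mod q.+1; rewrite subn1 /= => ->; last lia.
  by [].
rewrite expnM -modnXm h modnXm exp1n modn_small //; lia.
Qed.

Lemma corollary1 (q lambda t : nat) :
  prime_power q -> odd q ->
  lambda %| q.+1 -> 2 <= lambda -> lambda < q.+1 ->
  5 <= 2 * t + 1 ->
  let m := 2 * t + 1 in
  let n := (q ^ m + 1) %/ lambda in
  (~~ odd t -> least_nonleader q n ((q ^ t.+1 + 1) %/ lambda - q %/ lambda)) /\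
  (odd t -> least_nonleader q n ((q ^ t.+1 - 1) %/ lambda - (q - 2) %/ lambda)).
Proof.
move=> _ oq ldv l2 llt t5 m n.
have q2 : 2 <= q by lia.
have q3 : 3 <= q by move: oq q2; case: q {ldv llt m n} => [|[|[|q]]].
have t2 : 2 <= t by lia.
have l0 : 0 < lambda by lia.
have cql : coprime q lambda := coprime_dvdr ldv (coprimenS q).
have lq : lambda < q.
  have : lambda != q.
    apply/eqP => e; move: ldv; rewrite e -addn1 dvdn_addr // dvdn1; lia.
  lia.
have qmu := divnK ldv; set mu := q.+1 %/ lambda in qmu.
have Q1 : q <= q^t by rewrite -{1}(expn1 q) leq_pexp2l //; lia.
have qQ : q <= q * q^t by rewrite leq_pmulr // expn_gt0; lia.
have ldvN : lambda %| q^m + 1.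
  apply: (dvdn_trans ldv); rewrite /dvdn /m expnD expn1 -modnDml -modnMml pow_even; last lia.
  by rewrite mul1n modnDml addn1 modnn.
have ts := odd_double_half t.
have Sq : q ^ t.+1 = q * q^t by rewrite expnS.
split => ot.
- rewrite (negbTE ot) add0n in ts.
  have dK : lambda %| q^t.+1 + 1.
    apply: (dvdn_trans ldv); rewrite /dvdn -ts -addn1 expnD expn1 -modnDml -modnMml.
    rewrite -[t./2.*2]muln2 [t./2 * 2]mulnC pow_even; last lia.
    by rewrite mul1n modnDml addn1 modnn.
  have lK := divnK dK; set K := (q^t.+1 + 1) %/ lambda in lK.
  have D : q %/ lambda = mu - 1.
    apply: divn_of (_ : lambda - 1 < lambda) _ => //; first lia.
    rewrite mulnBl mul1n; lia.
  rewrite D.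
  apply: (main_gen (c := lambda)) => //; try lia.
  have e1 : lambda * K = q*q^t + 1 by rewrite mulnC lK Sq.
  have e2 : lambda * (mu-1) = q.+1 - lambda by rewrite mulnBr muln1 mulnC qmu.
  rewrite -/K mulnBr e1 e2 mulnBr muln1; clear -qQ lq l2 q3; lia.
- rewrite ot in ts.
  have dK : lambda %| q^t.+1 - 1.
    apply: (dvdn_trans ldv); rewrite -eqn_mod_dvd; last by rewrite expn_gt0; lia.
    have -> : t.+1 = 2 * (t./2).+1 by move: ts; rewrite -muln2; lia.
    rewrite pow_even; last lia.
    by rewrite modn_small //; lia.
  have lK := divnK dK; set K := (q^t.+1 - 1) %/ lambda in lK.
  case: (ltnP 2 lambda) => l3.
    have D : (q - 2) %/ lambda = mu - 1.
      apply: divn_of (_ : lambda - 3 < lambda) _ => //; first lia.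
      rewrite mulnBl mul1n; lia.
    rewrite D.
    apply: (main_gen (c := lambda - 2)) => //; try lia.
    have e1 : lambda * K = q*q^t - 1 by rewrite mulnC lK Sq.
    have e2 : lambda * (mu-1) = q.+1 - lambda by rewrite mulnBr muln1 mulnC qmu.
    rewrite -/K mulnBr e1 e2 mulnBr muln1; clear -qQ lq l3 q3; lia.
  have le2 : lambda = 2 by lia.
  have D : (q - 2) %/ lambda = mu - 2.
    apply: divn_of (_ : 1 < lambda) _ => //; first lia.
  rewrite D.
  apply: (main_gen (c := 2)) => //; try lia.
Qed.
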